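(* Let $X$ be a real Banach space and $A: X\rightrightarrows X^*$ a maximal monotone operator with $\mathcal{F}_A=\{F_A\}$. Then for every $\lambda_1,\lambda_2>0$ and $(w,w^* )\in X\times X^*$, the operator $\widehat{A}$ with graph \[ \mathrm{Gr}(\widehat{A}) = \{(\lambda_1 x - w,\ \lambda_2 x^* - w^* ): (x,x^* )\in\mathrm{Gr}(A)\} \] is maximal monotone and satisfies $\mathcal{F}_{\widehat{A}} = \{F_{\widehat{A}}\}$.
   Context: For a maximal monotone $A$, a representative function is a proper convex lsc $h: X\times X^*\to\mathbb{R}\cup\{+\infty\}$ with $h(x,x^* )\ge\langle x,x^*\rangle$ for all $(x,x^* )$ and equality on $\mathrm{Gr}(A)$; $\mathcal{F}_A$ is the set of all such functions. $F_A(x,x^* ) = \sup_{(y,y^* )\in\mathrm{Gr}(A)}\{\langle y,x^*\rangle + \langle x,y^*\rangle - \langle y,y^*\rangle\}$ is the Fitzpatrick function. *)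

(* Defs.v *)
From HB Require Import structures.
From mathcomp Require Import all_boot all_order all_algebra.
From mathcomp Require Import all_classical all_reals all_analysis.
From mathcomp Require Import ring.
Set Implicit Arguments. Unset Strict Implicit. Unset Printing Implicit Defensive.
Import Order.TTheory GRing.Theory Num.Theory.
Import numFieldNormedType.Exports.
Local Open Scope classical_set_scope.
Local Open Scope ring_scope.

Section Dual.
Variables (R : realType) (X : normedModType R).

Record dual := Dual {
  dfun :> X -> R;
  dfun_add : forall x y, dfun (x + y) = dfun x + dfun y;
  dfun_scale : forall (a : R) x, dfun (a *: x) = a * dfun x;
  dfun_cont : continuous dfun }.

Lemma dlin_add (a b : R) (f g : dual) x y :
  a * f (x + y) + b * g (x + y) = (a * f x + b * g x) + (a * f y + b * g y).
Proof. by rewrite !dfun_add; ring. Qed.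

Lemma dlin_scale (a b : R) (f g : dual) (c : R) x :
  a * f (c *: x) + b * g (c *: x) = c * (a * f x + b * g x).
Proof. by rewrite !dfun_scale; ring. Qed.

Lemma dlin_cont (a b : R) (f g : dual) :
  continuous (fun x => a * f x + b * g x).
Proof.
move=> x.
have Ha : {for x, continuous (fun _ : X => a)} by exact: cst_continuous.
have Hb : {for x, continuous (fun _ : X => b)} by exact: cst_continuous.
have Hf := continuousM Ha (@dfun_cont f x).
have Hg := continuousM Hb (@dfun_cont g x).
exact: (continuousD Hf Hg).
Qed.

Definition dlin (a b : R) (f g : dual) : dual :=
  @Dual (fun x => a * f x + b * g x) (@dlin_add a b f g)
        (@dlin_scale a b f g) (@dlin_cont a b f g).

End Dual.

Section Monotone.
Variables (R : realType) (X : normedModType R).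
Local Open Scope ereal_scope.

(* A set-valued operator A : X ⇉ X^* is identified with its graph Gr(A). *)
Definition graph := set (X * dual X).

Definition pairing (x : X) (xs : dual X) : R := xs x.

Definition monotone (G : graph) : Prop :=
  forall p q, G p -> G q ->
    (0 <= pairing (p.1 - q.1) p.2 - pairing (p.1 - q.1) q.2)%R.

Definition maximal_monotone (G : graph) : Prop :=
  monotone G /\ forall G' : graph, monotone G' -> G `<=` G' -> G' = G.

Definition fitzpatrick (G : graph) (p : X * dual X) : \bar R :=
  ereal_sup [set (pairing q.1 p.2 + pairing p.1 q.2 - pairing q.1 q.2)%:E
            | q in G].

Definition proper_fun (h : X * dual X -> \bar R) : Prop :=
  (forall p, h p != -oo) /\ (exists p, h p < +oo).

Definition convex_fun (h : X * dual X -> \bar R) : Prop :=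
  forall p q (t : R), (0 < t < 1)%R ->
    h ((t *: p.1 + (1 - t) *: q.1)%R, dlin t (1 - t) p.2 q.2)
      <= t%:E * h p + (1 - t)%:E * h q.

(* lower semicontinuity w.r.t. the (strong) norm topology of X × X^*,
   where the dual norm condition ||x^* - y^*|| <= d is written out as
   |x^*(y) - y^*(y)| <= d ||y|| for all y. *)
Definition lsc_fun (h : X * dual X -> \bar R) : Prop :=
  forall p (r : R), r%:E < h p ->
    exists2 d : R, (0 < d)%R & forall q : X * dual X,
      (`|q.1 - p.1| <= d)%R ->
      (forall y : X, `|q.2 y - p.2 y| <= d * `|y|)%R ->
      r%:E < h q.

Definition representative (G : graph) (h : X * dual X -> \bar R) : Prop :=
  [/\ proper_fun h, convex_fun h, lsc_fun h,
      (forall p, (pairing p.1 p.2)%:E <= h p) &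
      (forall p, G p -> h p = (pairing p.1 p.2)%:E)].

Definition repfam (G : graph) : set (X * dual X -> \bar R) :=
  [set h | representative G h].

Definition affine_graph (l1 l2 : R) (w : X) (ws : dual X) (G : graph) : graph :=
  [set ((l1 *: p.1 - w)%R, dlin l2 (-1) p.2 ws) | p in G].

End Monotone.

(* Main.v *)
Require Import Defs.
From HB Require Import structures.
From mathcomp Require Import all_boot all_order all_algebra.
From mathcomp Require Import all_classical all_reals all_analysis.
From mathcomp Require Import ring lra.
Import Order.TTheory GRing.Theory Num.Theory.
Import numFieldNormedType.Exports.
Local Open Scope classical_set_scope.
Local Open Scope ring_scope.

Section Aff.
Variables (R : realType) (X : normedModType R).

Lemma dual_ext (f g : dual X) : (forall x, f x = g x) -> f = g.
Proof.
case: f => f fa fs fc; case: g => g ga gs gc /= H.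
have E : f = g by apply: funext.
subst g; congr Dual; exact: Prop_irrelevance.
Qed.

Lemma dfunN (f : dual X) x : f (- x) = - f x.
Proof. by rewrite -scaleN1r dfun_scale mulN1r. Qed.

Lemma dfunB (f : dual X) x y : f (x - y) = f x - f y.
Proof. by rewrite dfun_add dfunN. Qed.

Lemma dfun0 (f : dual X) : f 0 = 0.
Proof. by rewrite -(subrr (0:X)) dfunB subrr. Qed.

Variables (a1 a2 : R) (w : X) (ws : dual X).
Hypotheses (a1gt0 : 0 < a1) (a2gt0 : 0 < a2).

Definition Tm (p : X * dual X) : X * dual X := (a1 *: p.1 - w, Defs.dlin a2 (-1) p.2 ws).
Definition Sm (q : X * dual X) : X * dual X :=
  (a1^-1 *: (q.1 + w), Defs.dlin a2^-1 a2^-1 q.2 ws).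
Definition cc (q : X * dual X) : R := - q.2 w - ws q.1 - ws w.
Definition Psi (g : X * dual X -> \bar R) q : \bar R :=
  ((a1 * a2)%:E * g (Sm q) + (cc q)%:E)%E.

Lemma a1n0 : a1 != 0. Proof. by rewrite gt_eqF. Qed.
Lemma a2n0 : a2 != 0. Proof. by rewrite gt_eqF. Qed.

Lemma TS q : Tm (Sm q) = q.
Proof.
case: q => u us; rewrite /Tm /Sm /=; congr pair.
  by rewrite scalerA mulfV ?a1n0 // scale1r addrK.
apply: dual_ext => x /=; field; exact: a2n0.
Qed.

Lemma ST p : Sm (Tm p) = p.
Proof.
case: p => u us; rewrite /Tm /Sm /=; congr pair.
  by rewrite subrK scalerA mulVf ?a1n0 // scale1r.
apply: dual_ext => x /=; field; exact: a2n0.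
Qed.

Lemma pairingS q : pairing q.1 q.2 = a1 * a2 * pairing (Sm q).1 (Sm q).2 + cc q.
Proof.
case: q => u us; rewrite /pairing /Sm /cc /=; rewrite !(dfun_scale, dfun_add).
field; by rewrite a1n0 a2n0.
Qed.

Lemma pairingT p : pairing (Tm p).1 (Tm p).2 = a1 * a2 * pairing p.1 p.2 + cc (Tm p).
Proof. by rewrite (pairingS (Tm p)) ST. Qed.

Lemma affine_graphE (G : graph X) : affine_graph a1 a2 w ws G = [set Tm p | p in G].
Proof. by []. Qed.

Lemma mono_affine (G : graph X) : Defs.monotone G -> Defs.monotone (affine_graph a1 a2 w ws G).
Proof.
move=> mG _ _ [p Gp <-] [q Gq <-]; rewrite /pairing /Tm /=.
have -> : a1 *: p.1 - w - (a1 *: q.1 - w) = a1 *: (p.1 - q.1).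
  by rewrite scalerBr opprB addrA subrK.
rewrite !dfun_scale.
have := mG p q Gp Gq; rewrite /pairing => h.
have -> : a2 * (a1 * p.2 (p.1 - q.1)) + -1 * (a1 * ws (p.1 - q.1)) -
  (a2 * (a1 * q.2 (p.1 - q.1)) + -1 * (a1 * ws (p.1 - q.1))) =
  (a1 * a2) * (p.2 (p.1 - q.1) - q.2 (p.1 - q.1)) by ring.
by apply: mulr_ge0 => //; apply: mulr_ge0; apply: ltW.
Qed.

Lemma mono_pre (G' : graph X) : Defs.monotone G' -> Defs.monotone [set p | G' (Tm p)].
Proof.
move=> mG p q /= Gp Gq; have := mG _ _ Gp Gq; rewrite /pairing /Tm /=.
have -> : a1 *: p.1 - w - (a1 *: q.1 - w) = a1 *: (p.1 - q.1).
  by rewrite scalerBr opprB addrA subrK.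
rewrite !dfun_scale.
have -> : a2 * (a1 * p.2 (p.1 - q.1)) + -1 * (a1 * ws (p.1 - q.1)) -
  (a2 * (a1 * q.2 (p.1 - q.1)) + -1 * (a1 * ws (p.1 - q.1))) =
  (a1 * a2) * (p.2 (p.1 - q.1) - q.2 (p.1 - q.1)) by ring.
by rewrite pmulr_rge0 // mulr_gt0.
Qed.

Lemma maxmono_affine (G : graph X) : maximal_monotone G ->
  maximal_monotone (affine_graph a1 a2 w ws G).
Proof.
move=> [mG maxG]; split; first exact: mono_affine.
move=> G' mG' sub.
have E : [set p | G' (Tm p)] = G.
  apply: maxG; first exact: mono_pre.
  by move=> p Gp /=; apply: sub; exists p.
apply/seteqP; split => [q G'q|//].
have H1 : G' (Tm (Sm q)) by rewrite TS.
have : [set p | G' (Tm p)] (Sm q) := H1.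
by rewrite E => GSq; exists (Sm q) => //; exact: TS.
Qed.


Lemma mulNN (r : R) (x : \bar R) : 0 < r -> x != -oo%E -> (r%:E * x)%E != -oo%E.
Proof.
move=> r0; case: x => // *; by rewrite gt0_muley ?lte_fin.
Qed.

Lemma addNN (r : R) (x : \bar R) : x != -oo%E -> (x + r%:E)%E != -oo%E.
Proof. by case: x. Qed.

Lemma addNN2 (x y : \bar R) : x != -oo%E -> y != -oo%E -> (x + y)%E != -oo%E.
Proof. by case: x; case: y. Qed.

Lemma k_gt0 : 0 < a1 * a2. Proof. exact: mulr_gt0. Qed.

Lemma Sm_mix p q (t : R) :
  Sm ((t *: p.1 + (1 - t) *: q.1), Defs.dlin t (1 - t) p.2 q.2) =
  ((t *: (Sm p).1 + (1 - t) *: (Sm q).1), Defs.dlin t (1 - t) (Sm p).2 (Sm q).2).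
Proof.
rewrite /Sm /=; congr pair; last first.
  by apply: dual_ext => x /=; ring.
rewrite !scalerDr !scalerA.
have -> : a1^-1 *: w = (t * a1^-1) *: w + ((1 - t) * a1^-1) *: w.
  by rewrite -scalerDl; congr (_ *: _); ring.
rewrite [t * _]mulrC [(1 - t) * _]mulrC.
by rewrite addrACA addrA.
Qed.

Lemma cc_mix p q (t : R) :
  cc ((t *: p.1 + (1 - t) *: q.1), Defs.dlin t (1 - t) p.2 q.2) =
  t * cc p + (1 - t) * cc q.
Proof. rewrite /cc /= !dfun_add !dfun_scale; ring. Qed.


Lemma Psi_ge (g : X * dual X -> \bar R) q :
  ((pairing (Sm q).1 (Sm q).2)%:E <= g (Sm q))%E ->
  ((pairing q.1 q.2)%:E <= Psi g q)%E.
Proof.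
move=> h; rewrite /Psi pairingS EFinD EFinM leeD2r //.
by rewrite lee_pmul2l ?lte_fin ?k_gt0.
Qed.

Lemma convex_Psi (g : X * dual X -> \bar R) :
  (forall p, g p != -oo%E) -> convex_fun g -> convex_fun (Psi g).
Proof.
move=> gN gC p q t t01.
have := gC (Sm p) (Sm q) t t01.
rewrite /Psi Sm_mix cc_mix.
have kE : (0 < (a1 * a2)%:E)%E by rewrite lte_fin k_gt0.
move: t01 => /andP[t0 t1].
have t1' : 0 < 1 - t by rewrite subr_gt0.
have NP : forall r, 0 < r -> forall x, x != -oo%E ->
    (r%:E * ((a1 * a2)%:E * x + (cc p)%:E))%E != -oo%E.
  by move=> r r0 x xN; apply: mulNN => //; apply: addNN; apply: mulNN => //; exact: k_gt0.
have NQ : forall r, 0 < r -> forall x, x != -oo%E ->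
    (r%:E * ((a1 * a2)%:E * x + (cc q)%:E))%E != -oo%E.
  by move=> r r0 x xN; apply: mulNN => //; apply: addNN; apply: mulNN => //; exact: k_gt0.
have gp := gN (Sm p); have gq := gN (Sm q).
have gm := gN ((t *: (Sm p).1 + (1 - t) *: (Sm q).1), Defs.dlin t (1 - t) (Sm p).2 (Sm q).2).
move: gp gq (NP t t0 _ (gN (Sm p))) (NQ _ t1' _ (gN (Sm q))).
case: (g (Sm p)) => [a| |] // _; case: (g (Sm q)) => [b| |] // _ N1 N2 H.
{ move: gm H; case: (g (_, _)) => [m| |] // _; rewrite -!EFinM -!EFinD !lee_fin => H.
  have : a1 * a2 * m <= a1 * a2 * (t * a + (1 - t) * b).
    by rewrite ler_pM2l ?k_gt0.
  lra. }
all: have tE : (0 < t%:E)%E by rewrite lte_fin.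
  all: have t1E : (0 < (1 - t)%:E)%E by rewrite lte_fin.
  all: rewrite ?(gt0_muley kE) ?addye // in N1 N2 *.
  all: rewrite ?(gt0_muley tE) ?(gt0_muley t1E).
  all: first [rewrite addye // leey | rewrite addey // leey].
all: by [].
Qed.


Lemma lsc_Psi (g : X * dual X -> \bar R) : lsc_fun g -> lsc_fun (Psi g).
Proof.
move=> gL p r; rewrite /Psi => hr.
have k0 := k_gt0; set k := a1 * a2 in k0 hr *.
pose r0 := (r - cc p) / k.
have kr0 : k * r0 = r - cc p by rewrite /r0; field; rewrite gt_eqF.
have [r1 r01 r1g] : exists2 r1, r0 < r1 & (r1%:E < g (Sm p))%E.
  move: hr; case: (g (Sm p)) => [b| |].
  - rewrite -EFinM -EFinD lte_fin => hb.
    have : k * r0 < k * b by rewrite kr0; lra.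
    rewrite ltr_pM2l // => r0b.
    by exists ((r0 + b) / 2); [lra | rewrite lte_fin; lra].
  - by move=> _; exists (r0 + 1); [lra | rewrite ltey].
  - by rewrite gt0_muleNy ?lte_fin.
have [dg dg0 Hg] := gL (Sm p) r1 r1g.
pose e := k * (r1 - r0).
have e0 : 0 < e by rewrite mulr_gt0 // subr_gt0.
have e2 : 0 < e / 2 by rewrite divr_gt0.
have := (cvgrPdist_lt _ _).1 (@dfun_cont _ _ ws p.1) (e / 2) e2.
move=> Hn; have [del del0 Hdel] := (nbhs_normP _ _).1 (Hn _).
have w1 : 0 < `|w| + 1 by rewrite ltr_wpDl.
pose d := Num.min (Num.min (a1 * dg) (a2 * dg)) (Num.min (del / 2) (e / (2 * (`|w| + 1)))).
have d1 : d <= a1 * dg by rewrite /d !ge_min lexx.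
have d2 : d <= a2 * dg by rewrite /d !ge_min lexx ?orbT.
have d3 : d <= del / 2 by rewrite /d !ge_min lexx ?orbT.
have d4 : d <= e / (2 * (`|w| + 1)) by rewrite /d !ge_min lexx ?orbT.
have d0 : 0 < d.
  by rewrite /d !lt_min !mulr_gt0 ?divr_gt0 ?mulr_gt0 // subr_gt0 r01.
exists d => //.
move=> q hq1 hq2.
have gq : (r1%:E < g (Sm q))%E.
  apply: Hg.
    have -> : (Sm q).1 - (Sm p).1 = a1^-1 *: (q.1 - p.1).
      by rewrite /Sm /= -scalerBr opprD addrACA subrr addr0.
    rewrite normrZ gtr0_norm ?invr_gt0 //.
    have -> : dg = a1^-1 * (a1 * dg) by rewrite mulrA mulVf ?a1n0 ?mul1r.
    by rewrite ler_pM2l ?invr_gt0 //; apply: le_trans d1.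
  move=> y.
  have -> : (Sm q).2 y - (Sm p).2 y = a2^-1 * (q.2 y - p.2 y) by rewrite /Sm /=; ring.
  rewrite normrM gtr0_norm ?invr_gt0 //.
  have -> : dg * `|y| = a2^-1 * (a2 * dg * `|y|) by rewrite !mulrA mulVf ?a2n0 ?mul1r.
  rewrite ler_pM2l ?invr_gt0 //; apply: le_trans (hq2 y) _.
  by rewrite ler_wpM2r.
have cw : `|q.2 w - p.2 w| <= e / 2.
  apply: le_trans (hq2 w) _.
  apply: (@le_trans _ _ (d * (`|w| + 1))).
    by rewrite ler_wpM2l ?ltW // ltrDl.
  apply: (@le_trans _ _ (e / (2 * (`|w| + 1)) * (`|w| + 1))).
    by rewrite ler_wpM2r // ltW.
  by rewrite le_eqVlt; apply/orP; left; apply/eqP; field; rewrite gt_eqF.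
have cws : `|ws p.1 - ws q.1| < e / 2.
  apply: Hdel; rewrite /ball_ /= distrC.
  by apply: (le_lt_trans hq1); apply: (le_lt_trans d3); rewrite ltr_pdivrMr // ltr_pMr // ltr1n.
have ccq : cc p - e < cc q.
  rewrite /cc.
  move: cw cws; rewrite ler_norml ltr_norml => /andP[c1 c2] /andP[c3 c4].
  lra.
move: gq; case: (g (Sm q)) => [b| |] //.
- rewrite !lte_fin => r1b.
  have : k * r1 < k * b by rewrite ltr_pM2l.
  have : e = k * r1 - k * r0 by rewrite /e; ring.
  lra.
- by move=> _; rewrite gt0_muley ?lte_fin // addye // ltey.
Qed.


Lemma rep_Psi (G : graph X) g : representative G g ->
  representative (affine_graph a1 a2 w ws G) (Psi g).
Proof.
case=> [[gN [p0 gp0]] gC gL gge geq]; split.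
- split.
    move=> q; rewrite /Psi; apply: addNN; apply: mulNN; [exact: k_gt0 | exact: gN].
  exists (Tm p0); rewrite /Psi ST.
  by move: gp0 (gN p0); case: (g p0) => // b _ _; rewrite -EFinM -EFinD ltey.
- exact: convex_Psi.
- exact: lsc_Psi.
- by move=> q; apply: Psi_ge; exact: gge.
- move=> _ [p Gp <-].
  change (Psi g (Tm p) = (pairing (Tm p).1 (Tm p).2)%:E).
  by rewrite /Psi ST geq // pairingT EFinD EFinM.
Qed.

Lemma term_id (v q : X * dual X) :
  pairing (Tm v).1 q.2 + pairing q.1 (Tm v).2 - pairing (Tm v).1 (Tm v).2 =
  a1 * a2 * (pairing v.1 (Sm q).2 + pairing (Sm q).1 v.2 - pairing v.1 v.2) + cc q.
Proof.
rewrite /pairing /Tm /Sm /cc /=.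
rewrite !(dfunB, dfun_add, dfun_scale).
field; by rewrite a1n0 a2n0.
Qed.

Lemma fitz_le (G : graph X) q :
  (fitzpatrick (affine_graph a1 a2 w ws G) q <= Psi (fitzpatrick G) q)%E.
Proof.
rewrite /fitzpatrick; apply: ge_ereal_sup => _ [u [v Gv Ev] <-].
have -> : u = Tm v by rewrite -Ev.
rewrite term_id EFinD EFinM leeD2r // lee_pmul2l ?lte_fin ?k_gt0 //.
by apply: ereal_sup_ubound; exists v.
Qed.

Lemma Psi_le g h q : (g (Sm q) <= h (Sm q))%E -> (Psi g q <= Psi h q)%E.
Proof.
by move=> H; rewrite /Psi leeD2r // lee_wpmul2l // lee_fin ltW // k_gt0.
Qed.

End Aff.

Section Inv.
Variables (R : realType) (X : normedModType R) (a1 a2 : R) (w : X) (ws : dual X).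
Hypotheses (a1gt0 : 0 < a1) (a2gt0 : 0 < a2).

Let b1 := a1^-1.
Let b2 := a2^-1.
Let w' : X := - (a1^-1 *: w).
Let ws' : dual X := Defs.dlin (- a2^-1) 0 ws ws.

Let b1gt0 : 0 < b1. Proof. by rewrite invr_gt0. Qed.
Let b2gt0 : 0 < b2. Proof. by rewrite invr_gt0. Qed.
Let a1n0 : a1 != 0. Proof. by rewrite gt_eqF. Qed.
Let a2n0 : a2 != 0. Proof. by rewrite gt_eqF. Qed.

Lemma TmInv p : Tm _ _ b1 b2 w' ws' p = Sm _ _ a1 a2 w ws p.
Proof.
case: p => u us; rewrite /Tm /Sm /b1 /b2 /w' /ws' /=; congr pair.
  by rewrite opprK scalerDr.
apply: dual_ext => x /=; ring.
Qed.

Lemma SmInv p : Sm _ _ b1 b2 w' ws' p = Tm _ _ a1 a2 w ws p.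
Proof.
case: p => u us; rewrite /Tm /Sm /b1 /b2 /w' /ws' /=; congr pair.
  by rewrite invrK scalerDr scalerN scalerA mulfV // scale1r.
apply: dual_ext => x /=; rewrite invrK; field; rewrite ?a1n0 ?a2n0 //=.
Qed.

Lemma ccInv q : a1 * a2 * cc _ _ w' ws' (Sm _ _ a1 a2 w ws q) + cc _ _ w ws q = 0.
Proof.
rewrite /cc /Sm /w' /ws' /=.
rewrite !(dfunN, dfun_add, dfun_scale, dfun0).
field; by rewrite a1n0 a2n0.
Qed.

Lemma affineK (G : graph X) :
  affine_graph b1 b2 w' ws' (affine_graph a1 a2 w ws G) = G.
Proof.
apply/seteqP; split.
  move=> _ [u [v Gv Ev] <-].
  have -> : u = Tm _ _ a1 a2 w ws v by rewrite -Ev.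
  change (G (Tm _ _ b1 b2 w' ws' (Tm _ _ a1 a2 w ws v))).
  by rewrite TmInv ST.
move=> v Gv; exists (Tm _ _ a1 a2 w ws v); first by exists v.
change (Tm _ _ b1 b2 w' ws' (Tm _ _ a1 a2 w ws v) = v).
by rewrite TmInv ST.
Qed.

Lemma PsiK h q : Psi _ _ a1 a2 w ws (Psi _ _ b1 b2 w' ws' h) q = h q.
Proof.
rewrite /Psi SmInv TS //.
have hk := ccInv q.
have kk : a1 * a2 * (b1 * b2) = 1 by rewrite /b1 /b2 mulrACA !mulfV // mulr1.
have kE : (0 < (a1 * a2)%:E)%E by rewrite lte_fin mulr_gt0.
have kE' : (0 < (b1 * b2)%:E)%E by rewrite lte_fin mulr_gt0.
case: (h q) => [x| |].
- rewrite -!EFinM -!EFinD; congr EFin.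
  transitivity (a1 * a2 * (b1 * b2) * x + (a1 * a2 * cc _ _ w' ws' (Sm _ _ a1 a2 w ws q) + cc _ _ w ws q)); first ring.
  by rewrite hk kk addr0 mul1r.
- by rewrite (gt0_muley kE') addye // (gt0_muley kE) addye.
- by rewrite (gt0_muleNy kE') addNye (gt0_muleNy kE) addNye.
Qed.

End Inv.


Theorem proposition3p2 (R : realType) (X : completeNormedModType R)
    (G : graph X) :
  maximal_monotone G -> repfam G = [set fitzpatrick G] ->
  forall (l1 l2 : R), 0 < l1 -> 0 < l2 ->
  forall (w : X) (ws : dual X),
    maximal_monotone (affine_graph l1 l2 w ws G) /\
    repfam (affine_graph l1 l2 w ws G) =
      [set fitzpatrick (affine_graph l1 l2 w ws G)].
Proof.
move=> maxG hrep l1 l2 l10 l20 w ws; split; first exact: maxmono_affine.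
set Gh := affine_graph l1 l2 w ws G.
have i10 : 0 < l1^-1 by rewrite invr_gt0.
have i20 : 0 < l2^-1 by rewrite invr_gt0.
set w' : X := - (l1^-1 *: w).
set ws' : dual X := Defs.dlin (- l2^-1) 0 ws ws.
have back : affine_graph l1^-1 l2^-1 w' ws' Gh = G by exact: affineK.
have FG : representative G (fitzpatrick G).
  by have : repfam G (fitzpatrick G) by rewrite hrep.
have PsiE : Psi _ _ l1 l2 w ws (fitzpatrick G) = fitzpatrick Gh.
  apply: funext => q; apply/le_anti/andP; split; last exact: fitz_le.
  rewrite -[X in (_ <= X)%E](PsiK _ _ _ _ w ws l10 l20 (fitzpatrick Gh) q).
  apply: Psi_le => //.
  rewrite -[X in (fitzpatrick X _ <= _)%E]back.
  exact: fitz_le.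
apply/seteqP; split.
- move=> h hh.
  have := rep_Psi _ _ _ _ w' ws' i10 i20 Gh h hh; rewrite back => r'.
  have : repfam G (Psi _ _ l1^-1 l2^-1 w' ws' h) by [].
  rewrite hrep /= => E.
  rewrite /= -PsiE -E; apply: funext => q.
  by rewrite PsiK.
- by move=> h /= ->; rewrite -PsiE; exact: rep_Psi.
Qed.
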